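(* Let $q$ be a power of an odd prime and let $\lambda\in\mathbb{F}_q$ with $\lambda\neq 0,1,-3$. Let $C_\lambda/\mathbb{F}_q$ be the plane quartic $x^4+y^4+z^4=(\lambda+1)(x^2y^2+y^2z^2+z^2x^2)$ and let $E^{(\lambda+3)}_\lambda/\mathbb{F}_q$ be the elliptic curve $(\lambda+3)y^2=x(x-1)(x-\lambda)$. Then $$\#C_\lambda(\mathbb{F}_q)=3\,\#E^{(\lambda+3)}_\lambda(\mathbb{F}_q)-2q-2.$$
   Context: For such $\lambda$, $C_\lambda$ is a smooth, geometrically irreducible plane curve of genus $3$; $\#X(\mathbb{F}_q)$ denotes the number of $\mathbb{F}_q$-rational points (for the quartic, points of the projective plane curve). *)

(* Defs.v *)
From HB Require Import structures.
From mathcomp Require Import all_boot all_order all_algebra all_field.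
Set Implicit Arguments. Unset Strict Implicit. Unset Printing Implicit Defensive.
Import GRing.Theory.
Local Open Scope ring_scope.

(* Canonical representatives of the points of the projective plane P^2(F):
   (1:y:z), (0:1:z), (0:0:1). *)
Definition proj_rep (F : finFieldType) (p : F * F * F) : bool :=
  let: (x, y, z) := p in
  [|| x == 1, (x == 0) && (y == 1) | [&& x == 0, y == 0 & z == 1]].

Definition nb_proj_points (F : finFieldType) (P : F -> F -> F -> F) : nat :=
  #|[set p : F * F * F | proj_rep p && (P p.1.1 p.1.2 p.2 == 0)]|.

Definition quartic_C (F : finFieldType) (lam : F) (x y z : F) : F :=
  x ^+ 4 + y ^+ 4 + z ^+ 4
  - (lam + 1) * (x ^+ 2 * y ^+ 2 + y ^+ 2 * z ^+ 2 + z ^+ 2 * x ^+ 2).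

(* Projective closure of E : (lambda+3) y^2 = x (x-1) (x-lambda):
   (lambda+3) y^2 z = x (x - z) (x - lambda z). *)
Definition cubic_E (F : finFieldType) (lam : F) (x y z : F) : F :=
  (lam + 3) * y ^+ 2 * z - x * (x - z) * (x - lam * z).

(* Main.v *)
Require Import Defs.
From HB Require Import structures.
From mathcomp Require Import all_boot all_order all_algebra all_field.
From mathcomp Require Import ring lra zify.
Set Implicit Arguments. Unset Strict Implicit. Unset Printing Implicit Defensive.
Import Order.TTheory GRing.Theory Num.Theory.
Local Open Scope ring_scope.

Section Chi.
Variable F : finFieldType.
Hypothesis two : (2%:R : F) != 0.

Lemma sum_ind_eq (a : F) : \sum_(x : F) ((x == a)%:R : int) = 1.
Proof. by rewrite (bigD1 a) //= eqxx big1 ?addr0 // => x /negbTE->. Qed.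

Definition nsq (x : F) : int := \sum_(t : F) ((t ^+ 2 == x)%:R : int).
Definition chi (x : F) : int := nsq x - 1.

Lemma nsq_mul (s y : F) : s != 0 -> nsq (s ^+ 2 * y) = nsq y.
Proof.
move=> s0; rewrite /nsq (reindex_inj (mulfI s0)) /=.
apply: eq_bigr => t _; rewrite exprMn (inj_eq (mulfI _)) // expf_neq0 //.
Qed.

Lemma nsq0 : nsq 0 = 1.
Proof. rewrite /nsq -[RHS](sum_ind_eq 0); apply: eq_bigr => t _; by rewrite expf_eq0 /=. Qed.

Lemma nsq_sqr (s : F) : s != 0 -> nsq (s ^+ 2) = 2.
Proof.
move=> s0; rewrite /nsq.
rewrite (eq_bigr (fun t => (t == s)%:R + (t == - s)%:R)); last first.
  move=> t _; rewrite eqf_sqr.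
  case: (eqVneq t s) => [->|] /=.
    have : s != - s.
      apply: contraNneq s0 => h. 
      have : (2%:R : F) * s = 0 by rewrite mulr2n mulrDl mul1r {1}h addNr.
      by move/eqP; rewrite mulf_eq0 (negbTE two).
    by move/negbTE ->.
  by case: (t == - s).
by rewrite big_split /= !sum_ind_eq.
Qed.

Lemma nsq_ex (x : F) : nsq x != 0 -> exists s, s ^+ 2 = x.
Proof.
move=> h; case: (pickP (fun t : F => t ^+ 2 == x)) => [s /eqP <-|]; first by exists s.
by move=> H; case/eqP: h; rewrite /nsq big1 // => t _; rewrite H.
Qed.

Lemma nsq_cases (x : F) : x != 0 -> nsq x = 0 \/ nsq x = 2.
Proof.
move=> x0; case: (eqVneq (nsq x) 0) => [|/nsq_ex [s hs]]; first by left.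
right; rewrite -hs nsq_sqr //; apply: contraNneq x0 => s0.
by rewrite -hs s0 expr0n.
Qed.

Lemma sum_nsq : \sum_(x : F) nsq x = #|F|%:R.
Proof.
rewrite /nsq exchange_big /=.
rewrite (eq_bigr (fun _ => 1)); last by move=> t _; under eq_bigr do rewrite eq_sym; exact: sum_ind_eq.
by rewrite sumr_const.
Qed.

Lemma chi0 : chi 0 = 0.
Proof. by rewrite /chi nsq0 subrr. Qed.

Lemma chi_sqr (s : F) : s != 0 -> chi (s ^+ 2) = 1.
Proof. by move=> s0; rewrite /chi nsq_sqr. Qed.

Lemma chi_sum : \sum_(x : F) chi x = 0.
Proof. by rewrite /chi sumrB sum_nsq sumr_const subrr. Qed.

Lemma chi_sqrM (s y : F) : s != 0 -> chi (s ^+ 2 * y) = chi y.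
Proof. by move=> s0; rewrite /chi nsq_mul. Qed.

Lemma chi_cases (x : F) : x != 0 -> chi x = 1 \/ chi x = -1.
Proof. by move=> /nsq_cases [] h; rewrite /chi h; [right|left]. Qed.

Lemma chi_le1 (x : F) : chi x <= 1.
Proof.
case: (eqVneq x 0) => [->|/chi_cases [] ->]; by rewrite ?chi0.
Qed.

Lemma chi_reindex_mul (a : F) (f : F -> int) : a != 0 ->
  \sum_(y : F) f (a * y) = \sum_(y : F) f y.
Proof. by move=> a0; rewrite [RHS](reindex_inj (mulfI a0)). Qed.

Lemma chi_mul (x y : F) : chi (x * y) = chi x * chi y.
Proof.
case: (eqVneq x 0) => [->|x0]; first by rewrite mul0r chi0 mul0r.
case: (eqVneq y 0) => [->|y0]; first by rewrite mulr0 chi0 mulr0.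
case: (nsq_cases x0) => hx.
  case: (nsq_cases y0) => hy; last first.
    have [s hs] : exists s, s ^+ 2 = y by apply: nsq_ex; rewrite hy.
    have s0 : s != 0 by apply: contraNneq y0 => s0; rewrite -hs s0 expr0n.
    by rewrite -hs mulrC chi_sqrM // chi_sqr // mulr1.
  rewrite /chi hx hy /=.
  pose g z := chi (x * z) + chi z.
  have g_le0 : forall z, g z <= 0.
    move=> z; rewrite /g; case: (eqVneq z 0) => [->|z0]; first by rewrite mulr0 chi0 addr0.
    case: (nsq_cases z0) => hz; first by rewrite /chi hz; have := chi_le1 (x * z); rewrite /chi; lia.
    have [s hs] : exists s, s ^+ 2 = z by apply: nsq_ex; rewrite hz.
    have s0 : s != 0 by apply: contraNneq z0 => s0; rewrite -hs s0 expr0n.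
    by rewrite -hs [x * _]mulrC chi_sqrM // chi_sqr // /chi hx.
  have gs : \sum_z (- g z) = 0.
    by rewrite sumrN big_split /= (chi_reindex_mul chi x0) chi_sum addr0 oppr0.
  have ge0 : forall z, predT z -> 0 <= - g z by move=> z _; rewrite oppr_ge0.
  have := psumr_eq0P ge0 gs (i := y) isT.
  rewrite /g /chi hy => /eqP; rewrite oppr_eq0 => /eqP h.
  have : nsq (x * y) = 2 by lia.
  by move=> ->.
have [s hs] : exists s, s ^+ 2 = x by apply: nsq_ex; rewrite hx.
have s0 : s != 0 by apply: contraNneq x0 => s0; rewrite -hs s0 expr0n.
by rewrite -hs chi_sqrM // chi_sqr // mul1r.
Qed.


Lemma sum_lin (a b : F) (f : F -> int) : a != 0 ->
  \sum_(x : F) f (a * x + b) = \sum_(x : F) f x.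
Proof.
move=> a0; rewrite [RHS](reindex_inj (h := fun x => a * x + b)) //.
by move=> x y /addIr /mulfI; apply.
Qed.

Lemma sum_ne0 : \sum_(x : F) ((x != 0)%:R : int) = #|F|%:R - 1.
Proof.
rewrite (eq_bigr (fun x => 1 - (x == 0)%:R)); last by move=> x _; case: (x == 0).
by rewrite sumrB sum_ind_eq sumr_const.
Qed.

Lemma chi_nonsq : exists c, chi c = -1.
Proof.
case: (pickP (fun c => chi c == -1)) => [c /eqP h|H]; first by exists c.
have : \sum_(x : F) chi x = \sum_(x : F) ((x != 0)%:R : int).
  apply: eq_bigr => x _; case: (eqVneq x 0) => [->|x0]; first by rewrite chi0.
  by case: (chi_cases x0) => // h; move: (H x); rewrite h eqxx.
rewrite chi_sum sum_ne0 natz => h.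
have gt1 : (1 < #|F|)%N by exact: finNzRing_gt1.
lia.
Qed.

Lemma chi_lin_sum (a b : F) : a != 0 -> \sum_(x : F) chi (a * x + b) = 0.
Proof. by move=> a0; rewrite (@sum_lin a b chi) // chi_sum. Qed.

Lemma half_sq : ((2%:R : F)^-1) ^+ 2 != 0.
Proof. by rewrite expf_neq0 // invr_eq0. Qed.

Lemma hyperbola (D : F) : D != 0 -> \sum_(u : F) nsq (u ^+ 2 - D) = #|F|%:R - 1.
Proof.
move=> D0; rewrite /nsq pair_bigA /=.
pose h (p : F * F) := ((p.1 + p.2) / 2%:R, (p.2 - p.1) / 2%:R).
pose g (p : F * F) := (p.1 - p.2, p.1 + p.2).
have hK : cancel h g.
  case=> m k; rewrite /g /h /=; congr pair; field; exact: two.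
rewrite (reindex_inj (can_inj hK)) /=.
rewrite (eq_bigr (fun p => ((p.1 * p.2 == D)%:R : int))); last first.
  case=> m k _ /=; congr (_%:R).
  have -> : ((k - m) / 2%:R) ^+ 2 = ((m + k) / 2%:R) ^+ 2 - m * k.
    by field; exact: two.
  by rewrite (inj_eq (addrI _)) (inj_eq (@oppr_inj _)).
rewrite -(pair_bigA _ (fun m k => ((m * k == D)%:R : int))) /=.
rewrite -sum_ne0; apply: eq_bigr => m _.
case: (eqVneq m 0) => [->|m0].
  by rewrite big1 // => k _; rewrite mul0r eq_sym (negbTE D0).
rewrite /= -[RHS](sum_ind_eq (D / m)); apply: eq_bigr => k _.
have -> : (k == D / m) = (m * k == D) by rewrite -(inj_eq (mulfI m0)) [m * (D / m)]mulrC divfK.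
by [].
Qed.


Lemma chi_hyp (D : F) : D != 0 -> \sum_(u : F) chi (u ^+ 2 - D) = -1.
Proof.
move=> D0; rewrite /chi sumrB hyperbola // sumr_const.
have -> : #|[pred x : F | xpredT x]| = #|F| by apply: eq_card.
by rewrite addrAC subrr add0r.
Qed.

Lemma chi_sq1 (a : F) : a != 0 -> chi a * chi a = 1.
Proof. by move=> a0; rewrite -chi_mul -expr2 chi_sqr. Qed.

Lemma chi_quad_sum (al be ga : F) : al != 0 -> be ^+ 2 - 4%:R * al * ga != 0 ->
  \sum_(t : F) chi (al * t ^+ 2 + be * t + ga) = - chi al.
Proof.
move=> a0 d0.
pose D := (2%:R^-1) ^+ 2 * (be ^+ 2 - 4%:R * al * ga).
have D0 : D != 0 by rewrite mulf_neq0 // half_sq.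
rewrite (eq_bigr (fun t => chi al * chi ((al * t + be / 2%:R) ^+ 2 - D))); last first.
  move=> t _; rewrite -chi_mul.
  have -> : al * ((al * t + be / 2%:R) ^+ 2 - D) = al ^+ 2 * (al * t ^+ 2 + be * t + ga).
    by rewrite /D; field; exact: two.
  by rewrite chi_sqrM.
rewrite -mulr_sumr (@sum_lin al (be / 2%:R) (fun u => chi (u ^+ 2 - D))) //.
by rewrite chi_hyp // mulrN1.
Qed.

Lemma quad_roots (b c : F) :
  \sum_(z : F) ((z ^+ 2 + b * z + c == 0)%:R : int) = nsq (b ^+ 2 - 4%:R * c).
Proof.
rewrite -(@sum_lin 1 (- (b / 2%:R)) (fun z => ((z ^+ 2 + b * z + c == 0)%:R : int))) ?oner_eq0 //.
rewrite -(nsq_mul _ (s := 2%:R^-1)) ?invr_eq0 //.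
apply: eq_bigr => w _; congr (_%:R).
have -> : (1 * w - b / 2%:R) ^+ 2 + b * (1 * w - b / 2%:R) + c =
   w ^+ 2 - (2%:R^-1) ^+ 2 * (b ^+ 2 - 4%:R * c) by field; exact: two.
by rewrite subr_eq0.
Qed.

End Chi.

Section Cone.
Variable F : finFieldType.

Lemma card_int (T : finType) (Q : pred T) :
  (#|[set p | Q p]| : int) = \sum_(p : T) ((Q p)%:R : int).
Proof.
rewrite -natz cardsE -sum1_card natr_sum big_mkcond /=.
by apply: eq_bigr => p _; rewrite unfold_in; case: (Q p).

Qed.

Lemma sum3 (f : F * F * F -> int) :
  \sum_(p : F * F * F) f p = \sum_(x : F) \sum_(y : F) \sum_(z : F) f (x, y, z).
Proof.
symmetry; rewrite pair_bigA /= pair_bigA /=.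
by apply: eq_bigr => -[[a b] c] _.
Qed.

Lemma sum_ne0_const (K : int) : \sum_(x : F | x != 0) K = (#|F|%:R - 1) * K.
Proof.
rewrite big_mkcond /= -(sum_ne0 F) mulr_suml; apply: eq_bigr => x _.
by case: (x != 0); rewrite ?mul1r ?mul0r.
Qed.

Lemma sum_split0 (G : F -> int) : \sum_(x : F) G x = G 0 + \sum_(x : F | x != 0) G x.
Proof. by rewrite (bigD1 0). Qed.

Lemma cone (P : F -> F -> F -> F) (d : nat) : (0 < d)%N ->
  (forall c x y z, P (c * x) (c * y) (c * z) = c ^+ d * P x y z) ->
  \sum_(x : F) \sum_(y : F) \sum_(z : F) ((P x y z == 0)%:R : int) =
  1 + (#|F|%:R - 1) * (nb_proj_points P)%:Z.
Proof.
move=> d0 hom.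
have homE : forall c x y z, c != 0 -> (P (c * x) (c * y) (c * z) == 0) = (P x y z == 0).
  by move=> c x y z c0; rewrite hom mulf_eq0 expf_eq0 (negbTE c0) andbF.
have P0 : P 0 0 0 = 0 by have := hom 0 0 0 0; rewrite !mul0r expr0n; move: d0; rewrite lt0n => /negbTE -> ; rewrite mul0r.
have -> : (nb_proj_points P)%:Z =
   \sum_(y : F) \sum_(z : F) ((P 1 y z == 0)%:R : int) +
   \sum_(z : F) ((P 0 1 z == 0)%:R : int) + ((P 0 0 1 == 0)%:R : int).
  rewrite /nb_proj_points card_int sum3 /=.
  rewrite [LHS](bigD1 (1 : F)) //= [X in _ + X = _](bigD1 (0 : F)) /=; last by rewrite eq_sym oner_neq0.
  rewrite [X in _ + (_ + X) = _]big1; last first.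
    move=> x /andP [x1 x0]; rewrite big1 // => y _; rewrite big1 // => z _.
    by rewrite (negbTE x1) (negbTE x0).
  rewrite !eqxx /= eq_sym oner_eq0 /= addr0 -addrA; congr (_ + _).
  rewrite [LHS](bigD1 (1 : F)) //= [X in _ + X = _](bigD1 (0 : F)) /=; last by rewrite eq_sym oner_neq0.
  rewrite [X in _ + (_ + X) = _]big1; last first.
    move=> y /andP [y1 y0]; rewrite big1 // => z _.
    by rewrite (negbTE y1) (negbTE y0).
  rewrite !eqxx /= eq_sym oner_eq0 /= addr0; congr (_ + _).
  rewrite [LHS](bigD1 (1 : F)) //= big1; last first.
    by move=> z /negbTE z1; rewrite z1.
  by rewrite eqxx addr0.
rewrite (sum_split0 (fun x => \sum_y \sum_z _)).
have -> : \sum_(x | x != 0) \sum_y \sum_z ((P x y z == 0)%:R : int) =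
     (#|F|%:R - 1) * \sum_(y : F) \sum_(z : F) ((P 1 y z == 0)%:R : int).
  rewrite -sum_ne0_const; apply: eq_bigr => x x0.
  rewrite (reindex_inj (mulfI x0)) /=; apply: eq_bigr => y _.
  rewrite (reindex_inj (mulfI x0)) /=; apply: eq_bigr => z _.
  by rewrite -{1}[x]mulr1 homE.
rewrite (sum_split0 (fun y => \sum_z _)).
have -> : \sum_(y | y != 0) \sum_z ((P 0 y z == 0)%:R : int) =
     (#|F|%:R - 1) * \sum_(z : F) ((P 0 1 z == 0)%:R : int).
  rewrite -sum_ne0_const; apply: eq_bigr => y y0.
  rewrite (reindex_inj (mulfI y0)) /=; apply: eq_bigr => z _.
  by rewrite -{1}[y]mulr1 -{1}(mulr0 y) homE.
rewrite (sum_split0 (fun z => ((P 0 0 z == 0)%:R : int))) P0 eqxx.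
have -> : \sum_(z | z != 0) ((P 0 0 z == 0)%:R : int) =
     (#|F|%:R - 1) * ((P 0 0 1 == 0)%:R : int).
  rewrite -sum_ne0_const; apply: eq_bigr => z z0.
  by have := homE z 0 0 1 z0; rewrite !mulr0 mulr1 => ->.
rewrite /= mulr1n; ring.
Qed.

End Cone.

Section Isog.
Variable F : finFieldType.
Hypothesis two : (2%:R : F) != 0.

Lemma fiber (G : F -> int) : \sum_(x : F) G (x ^+ 2) = \sum_(X : F) nsq X * G X.
Proof.
rewrite /nsq; under [RHS]eq_bigr do rewrite mulr_suml.
rewrite exchange_big /=; apply: eq_bigr => t _.
rewrite (bigD1 (t ^+ 2)) //= eqxx mul1r big1 ?addr0 // => X /negbTE.
by rewrite eq_sym => ->; rewrite mul0r.
Qed.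

Lemma inv_count (s : F) :
  \sum_(t : F | t != 0) ((t + t^-1 == s)%:R : int) = nsq (s ^+ 2 - 4%:R).
Proof.
have := quad_roots two (- s) 1; rewrite sqrrN mulr1 => <-.
rewrite [RHS](bigD1 0) //= expr0n /= mulr0 !add0r oner_eq0 add0r.
apply: eq_bigr => t t0; congr (_%:R).
have -> : t ^+ 2 + - s * t + 1 = t * (t + t^-1 - s) by field.
by rewrite mulf_eq0 (negbTE t0) /= subr_eq0.
Qed.

Lemma isog (al be : F) : al != 0 ->
  \sum_(t : F) chi (t * (al * t ^+ 2 + be * t + al)) =
  \sum_(s : F) chi ((s ^+ 2 - 4%:R) * (al * s + be)).
Proof.
move=> a0.
rewrite (sum_split0 (fun t => chi (t * (al * t ^+ 2 + be * t + al)))) mul0r chi0 add0r.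
rewrite (eq_bigr (fun t => \sum_(s : F) ((t + t^-1 == s)%:R : int) * chi (al * s + be))); last first.
  move=> t t0; rewrite (bigD1 (t + t^-1)) //= eqxx mul1r big1 ?addr0; last first.
    by move=> s /negbTE; rewrite eq_sym => ->; rewrite mul0r.
  have -> : t * (al * t ^+ 2 + be * t + al) = t ^+ 2 * (al * (t + t^-1) + be) by field.
  by rewrite chi_sqrM.
rewrite exchange_big /=.
rewrite (eq_bigr (fun s => nsq (s ^+ 2 - 4%:R) * chi (al * s + be))); last first.
  by move=> s _; rewrite -mulr_suml inv_count.
rewrite (eq_bigr (fun s => chi (al * s + be) + chi ((s ^+ 2 - 4%:R) * (al * s + be)))); last first.
  by move=> s _; rewrite chi_mul // /chi; ring.
by rewrite big_split /= chi_lin_sum // add0r.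
Qed.

End Isog.

Section Main.
Variable F : finFieldType.
Variable lam : F.
Hypothesis two : (2%:R : F) != 0.
Hypothesis l0 : lam != 0.
Hypothesis l1 : lam != 1.
Hypothesis l3 : lam != -3.

Let a := lam + 1.
Let al := a ^+ 2 - 4%:R.
Let be := 2%:R * a ^+ 2 + 4%:R * a.
Definition Qf (X Y Z : F) := X ^+ 2 + Y ^+ 2 + Z ^+ 2 - a * (X * Y + Y * Z + Z * X).
Definition Dl (X Y : F) := al * X ^+ 2 + be * X * Y + al * Y ^+ 2.
Definition SE := \sum_(x : F) chi ((lam + 3%:R) * (x * (x - 1) * (x - lam))).

Lemma sum_const1_int : \sum_(x : F) (1 : int) = #|F|%:R.
Proof.
rewrite sumr_const.
by have -> : #|[pred x : F | xpredT x]| = #|F| by apply: eq_card.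
Qed.

Lemma l3' : lam + 3%:R != 0.
Proof. by rewrite addr_eq0. Qed.
Lemma l1' : lam - 1 != 0.
Proof. by rewrite subr_eq0. Qed.
Lemma al0 : al != 0.
Proof.
have -> : al = (lam + 3%:R) * (lam - 1) by rewrite /al /a; ring.
by rewrite mulf_neq0 // ?l3' ?l1'.
Qed.

Lemma disc0 : be ^+ 2 - 4%:R * al * al != 0.
Proof.
have -> : be ^+ 2 - 4%:R * al * al = (2%:R ^+ 4) * (lam + 3%:R) ^+ 2 * lam by rewrite /be /al /a; ring.
by rewrite !mulf_neq0 // ?expf_neq0 // l3'.
Qed.

Lemma Qroots (X Y : F) : \sum_(Z : F) ((Qf X Y Z == 0)%:R : int) = nsq (Dl X Y).
Proof.
have := quad_roots two (- a * (X + Y)) (X ^+ 2 + Y ^+ 2 - a * X * Y).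
have -> : (- a * (X + Y)) ^+ 2 - 4%:R * (X ^+ 2 + Y ^+ 2 - a * X * Y) = Dl X Y.
  by rewrite /Dl /al /be; ring.
move=> <-; apply: eq_bigr => Z _; congr (_%:R); congr (_ == 0).
by rewrite /Qf; ring.
Qed.

Lemma Dl_scale (Y t : F) : Dl (Y * t) Y = Y ^+ 2 * Dl t 1.
Proof. by rewrite /Dl; ring. Qed.

Lemma sumDelta : \sum_(X : F) \sum_(Y : F) chi (Dl X Y) = 0.
Proof.
rewrite exchange_big /= (sum_split0 (fun Y => \sum_X chi (Dl X Y))).
rewrite (sum_split0 (fun X => chi (Dl X 0))).
have -> : Dl 0 0 = 0 by rewrite /Dl; ring.
rewrite chi0 add0r.
rewrite (eq_bigr (fun _ => chi al)); last first.
  move=> X X0; have -> : Dl X 0 = X ^+ 2 * al by rewrite /Dl; ring.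
  by rewrite chi_sqrM.
rewrite [X in _ + X = _](eq_bigr (fun _ => - chi al)); last first.
  move=> Y Y0; rewrite (reindex_inj (mulfI Y0)) /=.
  under eq_bigr do rewrite Dl_scale chi_sqrM //.
  rewrite -(chi_quad_sum two al0 disc0); apply: eq_bigr => t _.
  by congr chi; rewrite /Dl; ring.
by rewrite !sum_ne0_const mulrN addrN.
Qed.

Lemma NQ : \sum_(X : F) \sum_(Y : F) nsq (Dl X Y) = (#|F|%:R) ^+ 2.
Proof.
have := sumDelta; rewrite /chi.
under eq_bigr do rewrite sumrB.
rewrite sumrB => /eqP; rewrite subr_eq0 => /eqP ->.
rewrite !sumr_const.
have -> : #|[pred x : F | xpredT x]| = #|F| by apply: eq_card.
by rewrite expr2 mulr_natr.
Qed.


Lemma K_eq : \sum_(t : F) chi (t * Dl t 1) = SE.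
Proof.
rewrite (eq_bigr (fun t => chi (t * (al * t ^+ 2 + be * t + al)))); last first.
  by move=> t _; congr chi; rewrite /Dl; ring.
rewrite isog //; last exact: al0.
pose mu := 4%:R / (lam - 1); pose nu := - (2%:R * (lam + 1)) / (lam - 1).
have mu0 : mu != 0.
  have h4 : (4%:R : F) != 0.
    have -> : (4%:R : F) = 2%:R ^+ 2 by ring.
    by rewrite expf_neq0.
  by rewrite /mu mulf_neq0 // invr_eq0 l1'.
rewrite -(@sum_lin F mu nu (fun s => chi ((s ^+ 2 - 4%:R) * (al * s + be)))) //.
apply: eq_bigr => x _.
have h1 := l1'.
have -> : ((mu * x + nu) ^+ 2 - 4%:R) * (al * (mu * x + nu) + be) =
   (8%:R / (lam - 1)) ^+ 2 * ((lam + 3%:R) * (x * (x - 1) * (x - lam))).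
  by rewrite /mu /nu /al /be /a; field.
rewrite chi_sqrM //; rewrite mulf_neq0 ?invr_eq0 //.
have -> : (8%:R : F) = 2%:R ^+ 3 by ring.
by rewrite expf_neq0.
Qed.

Lemma S2 : \sum_(X : F) \sum_(Y : F) chi X * chi Y * nsq (Dl X Y) = (#|F|%:R - 1) * SE.
Proof.
rewrite (eq_bigr (fun X => \sum_(Y : F) (chi X * chi Y + chi (X * Y * Dl X Y)))); last first.
  move=> X _; apply: eq_bigr => Y _.
  have -> : nsq (Dl X Y) = 1 + chi (Dl X Y) by rewrite /chi; ring.
  by rewrite mulrDr mulr1 !chi_mul.
under eq_bigr do rewrite big_split /=.
rewrite big_split /=.
rewrite [X in X + _](eq_bigr (fun _ => 0)); last by move=> X _; rewrite -mulr_sumr chi_sum mulr0.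
rewrite big1_eq add0r exchange_big /=.
rewrite (sum_split0 (fun Y => \sum_X chi (X * Y * Dl X Y))) big1 ?add0r; last first.
  by move=> X _; rewrite mulr0 mul0r chi0.
rewrite -sum_ne0_const; apply: eq_bigr => Y Y0.
rewrite (reindex_inj (mulfI Y0)) /= -K_eq; apply: eq_bigr => t _.
rewrite Dl_scale.
have -> : Y * t * Y * (Y ^+ 2 * Dl t 1) = (Y ^+ 2) ^+ 2 * (t * Dl t 1) by ring.
by rewrite chi_sqrM // expf_neq0.
Qed.


Definition Ip (p : F * F * F) : int := (Qf p.1.1 p.1.2 p.2 == 0)%:R.
Definition oddp (p : F * F * F) : int :=
  chi p.1.1 + chi p.1.2 + chi p.2 + chi p.1.1 * chi p.1.2 * chi p.2.

Lemma Qf_scale (c X Y Z : F) : Qf (c * X) (c * Y) (c * Z) = c ^+ 2 * Qf X Y Z.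
Proof. by rewrite /Qf; ring. Qed.

Lemma odd_sum : \sum_(p : F * F * F) Ip p * oddp p = 0.
Proof.
have [c hc] := chi_nonsq two.
have c0 : c != 0 by apply/eqP => e; move: hc; rewrite e chi0 => /eqP.
set S := \sum_p _.
have : S = - S.
  rewrite {1}/S (reindex_inj (h := fun p => (c * p.1.1, c * p.1.2, c * p.2))) /=; last first.
    by move=> [[x y] z] [[x' y'] z'] /= [/(mulfI c0) -> /(mulfI c0) -> /(mulfI c0) ->].
  rewrite /S -sumrN; apply: eq_bigr => p _.
  rewrite /Ip /oddp /= Qf_scale mulf_eq0 expf_eq0 (negbTE c0) /= !chi_mul // hc; ring.
lia.
Qed.

Lemma perm1 : \sum_(p : F * F * F) Ip p * (chi p.1.2 * chi p.2) =
              \sum_(p : F * F * F) Ip p * (chi p.1.1 * chi p.1.2).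
Proof.
pose sg (p : F * F * F) := (p.2, p.1.1, p.1.2).
pose tg (p : F * F * F) := (p.1.2, p.2, p.1.1).
have K : cancel sg tg by move=> [[x y] z].
rewrite (reindex_inj (can_inj K)) /=; apply: eq_bigr => p _.
by rewrite /Ip /=; congr (_%:R * _); congr (_ == 0); rewrite /Qf; ring.
Qed.

Lemma perm2 : \sum_(p : F * F * F) Ip p * (chi p.2 * chi p.1.1) =
              \sum_(p : F * F * F) Ip p * (chi p.1.1 * chi p.1.2).
Proof.
pose sg (p : F * F * F) := (p.1.2, p.2, p.1.1).
pose tg (p : F * F * F) := (p.2, p.1.1, p.1.2).
have K : cancel sg tg by move=> [[x y] z].
rewrite (reindex_inj (can_inj K)) /=; apply: eq_bigr => p _.
by rewrite /Ip /=; congr (_%:R * _); congr (_ == 0); rewrite /Qf; ring.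
Qed.


Lemma sumI : \sum_(p : F * F * F) Ip p = (#|F|%:R) ^+ 2.
Proof.
rewrite sum3 -NQ; apply: eq_bigr => X _; apply: eq_bigr => Y _.
by rewrite -Qroots.
Qed.

Lemma sumIxy : \sum_(p : F * F * F) Ip p * (chi p.1.1 * chi p.1.2) = (#|F|%:R - 1) * SE.
Proof.
rewrite sum3 -S2; apply: eq_bigr => X _; apply: eq_bigr => Y _.
rewrite -Qroots mulr_sumr; apply: eq_bigr => Z _.
by rewrite /Ip /= mulrC.
Qed.

Lemma T_eq : \sum_(x : F) \sum_(y : F) \sum_(z : F) ((quartic_C lam x y z == 0)%:R : int) =
   (#|F|%:R) ^+ 2 + 3%:R * ((#|F|%:R - 1) * SE).
Proof.
have qE : forall x y z, quartic_C lam x y z = Qf (x ^+ 2) (y ^+ 2) (z ^+ 2).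
  by move=> x y z; rewrite /quartic_C /Qf /a; ring.
under eq_bigr do under eq_bigr do under eq_bigr do rewrite qE.
rewrite (fiber (fun X => \sum_y \sum_z ((Qf X (y ^+ 2) (z ^+ 2) == 0)%:R : int))).
under eq_bigr => X _ do rewrite (fiber (fun Y => \sum_z ((Qf X Y (z ^+ 2) == 0)%:R : int))).
under eq_bigr => X _ do under eq_bigr => Y _ do rewrite (fiber (fun Z => ((Qf X Y Z == 0)%:R : int))).
transitivity (\sum_(p : F * F * F) Ip p * (1 + chi p.1.1) * (1 + chi p.1.2) * (1 + chi p.2)).
  rewrite sum3; apply: eq_bigr => X _; rewrite mulr_sumr; apply: eq_bigr => Y _.
  rewrite !mulr_sumr; apply: eq_bigr => Z _.
  by rewrite /Ip /chi /=; ring.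
rewrite (eq_bigr (fun p => Ip p + Ip p * (chi p.1.1 * chi p.1.2) + Ip p * (chi p.1.2 * chi p.2)
   + Ip p * (chi p.2 * chi p.1.1) + Ip p * oddp p)); last first.
  by move=> p _; rewrite /oddp; ring.
rewrite !big_split /= odd_sum perm1 perm2 sumI sumIxy; ring.
Qed.


Lemma E_chart : \sum_(x : F) \sum_(y : F) ((cubic_E lam x y 1 == 0)%:R : int) = #|F|%:R + SE.
Proof.
have c0 := l3'.
rewrite /SE -sum_const1_int -big_split /=; apply: eq_bigr => x _.
have -> : 1 + chi ((lam + 3%:R) * (x * (x - 1) * (x - lam))) =
   nsq ((lam + 3%:R)^-1 ^+ 2 * ((lam + 3%:R) * (x * (x - 1) * (x - lam)))).
  by rewrite nsq_mul ?invr_eq0 // /chi; ring.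
apply: eq_bigr => y _; congr (_%:R).
rewrite /cubic_E.
have -> : (lam + 3%:R)^-1 ^+ 2 * ((lam + 3%:R) * (x * (x - 1) * (x - lam))) =
   (x * (x - 1) * (x - lam)) / (lam + 3%:R) by field.
congr (nat_of_bool _); rewrite !mulr1 subr_eq0; apply/eqP/eqP => [<-|->]; by field.
Qed.

Lemma NE_eq : \sum_(x : F) \sum_(y : F) \sum_(z : F) ((cubic_E lam x y z == 0)%:R : int) =
   #|F|%:R + (#|F|%:R - 1) * (#|F|%:R + SE).
Proof.
under eq_bigr do rewrite exchange_big /=.
rewrite exchange_big /= (sum_split0 (fun z => \sum_x \sum_y ((cubic_E lam x y z == 0)%:R : int))).
congr (_ + _).
  rewrite (sum_split0 (fun x => \sum_y ((cubic_E lam x y 0 == 0)%:R : int))).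
  rewrite [X in _ + X = _]big1 ?addr0; last first.
    move=> x x0; rewrite big1 // => y _.
    have -> : cubic_E lam x y 0 = - x ^+ 3 by rewrite /cubic_E; ring.
    by rewrite oppr_eq0 expf_eq0 (negbTE x0) andbF.
  rewrite (eq_bigr (fun _ => 1)); first by rewrite sum_const1_int.
  move=> y _; have -> : cubic_E lam 0 y 0 = 0 by rewrite /cubic_E; ring.
  by rewrite eqxx.
rewrite -E_chart -sum_ne0_const; apply: eq_bigr => z z0.
rewrite (reindex_inj (mulfI z0)) /=; apply: eq_bigr => x _.
rewrite (reindex_inj (mulfI z0)) /=; apply: eq_bigr => y _.
have -> : cubic_E lam (z * x) (z * y) z = z ^+ 3 * cubic_E lam x y 1 by rewrite /cubic_E; ring.
by rewrite mulf_eq0 expf_eq0 (negbTE z0) andbF.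
Qed.

End Main.
Unset Implicit Arguments.

Theorem mainTheorem2 (F : finFieldType) (lam : F) :
  (2 \notin [pchar F])%N -> lam != 0 -> lam != 1 -> lam != -3 ->
  (nb_proj_points (quartic_C lam))%:Z =
    3 * (nb_proj_points (cubic_E lam))%:Z - 2 * (#|F|)%:Z - 2.
Proof.
move=> h2 l0 l1 l3.
have two : (2%:R : F) != 0.
  apply: contra h2 => h; rewrite inE /=; exact: h.
have hT := cone (P := quartic_C lam) (d := 4) isT
  (fun c x y z => ltac:(rewrite /quartic_C; ring)).
have hE := cone (P := cubic_E lam) (d := 3) isT
  (fun c x y z => ltac:(rewrite /cubic_E; ring)).
rewrite T_eq // in hT.
rewrite NE_eq // in hE.
set N := (nb_proj_points (quartic_C lam))%:Z in hT *.
set M := (nb_proj_points (cubic_E lam))%:Z in hE *.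
set S := SE lam in hT hE.
rewrite natz in hT hE *.
set q := (#|F|)%:Z in hT hE *.
have gt1 : (1 < #|F|)%N by exact: finNzRing_gt1.
have q1 : q - 1 != 0 by rewrite /q; apply/eqP; lia.
have e : (q - 1) * (N - (3 * M - 2 * q - 2)) =
   (1 + (q - 1) * N) - 3 * (1 + (q - 1) * M) + 2 + (q - 1) * (2 * q + 2) by ring.
rewrite -hT -hE in e.
have e0 : (q - 1) * (N - (3 * M - 2 * q - 2)) = 0 by rewrite e; ring.
move/eqP: e0; rewrite mulf_eq0 (negbTE q1) /= subr_eq0 => /eqP.
done.
Qed.
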